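(* Fix $\beta>2$ and let $G_\beta,H_\beta,K_\beta,g_\beta$ and $F_\beta(\mathbf{x},r)$ be as in the context. For every $r>0$, the equation $$H_\beta(y-3r/2)+H_\beta(y)+K_\beta(y)=1,\qquad y\in(-\infty,g_\beta],$$ has a unique solution $y_2^\beta(r)$. Furthermore, the point $\big(H_\beta(y_2^\beta(r)),K_\beta(y_2^\beta(r))\big)$ is a local minimum of $F_\beta(\cdot,r)$.
   Context: $\Xi=\{(x_1,x_2): x_1,x_2\ge0,\ x_1+x_2\le1\}$, $x_0=1-x_1-x_2$, $\mathbf{v}_k=(\cos(2\pi k/3),\sin(2\pi k/3))$, and $F_\beta(\mathbf{x},r)=-\frac12|\sum_{k=0}^2x_k\mathbf{v}_k|^2+\frac1\beta\sum_{k=0}^2x_k\log(3x_k)+r\,x_0-\frac r2(x_1+x_2)$ (potential with external field of magnitude $r$, angle $\pi$). $G_\beta(x)=\frac1\beta\log x-\frac32x$ on $(0,\infty)$, $l_\beta=2/(3\beta)$, $g_\beta=G_\beta(l_\beta)$; for $y<g_\beta$, $H_\beta(y)<l_\beta<K_\beta(y)$ are the two solutions of $G_\beta(x)=y$, and $H_\beta(g_\beta)=K_\beta(g_\beta)=l_\beta$. *)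

(* Defs.v *)
From Stdlib Require Import Reals Lra ClassicalEpsilon.
Open Scope R_scope.

Definition G_beta (beta x : R) : R := / beta * ln x - 3 / 2 * x.
Definition l_beta (beta : R) : R := 2 / (3 * beta).
Definition g_beta (beta : R) : R := G_beta beta (l_beta beta).

Definition H_beta (beta y : R) : R :=
  epsilon (inhabits 0) (fun x => 0 < x <= l_beta beta /\ G_beta beta x = y).
Definition K_beta (beta y : R) : R :=
  epsilon (inhabits 0) (fun x => l_beta beta <= x /\ G_beta beta x = y).

Definition in_Xi (x1 x2 : R) : Prop := 0 <= x1 /\ 0 <= x2 /\ x1 + x2 <= 1.

Definition vx (k : R) : R := cos (2 * PI * k / 3).
Definition vy (k : R) : R := sin (2 * PI * k / 3).

(* x log(3x), with the convention 0 log 0 = 0 (Stdlib ln 0 = 0) *)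
Definition xlog3x (x : R) : R := x * ln (3 * x).

Definition F_beta (beta x1 x2 r : R) : R :=
  let x0 := 1 - x1 - x2 in
  let sx := x0 * vx 0 + x1 * vx 1 + x2 * vx 2 in
  let sy := x0 * vy 0 + x1 * vy 1 + x2 * vy 2 in
  - / 2 * (sx ^ 2 + sy ^ 2)
  + / beta * (xlog3x x0 + xlog3x x1 + xlog3x x2)
  + r * x0 - r / 2 * (x1 + x2).

Definition local_min_F (beta r p1 p2 : R) : Prop :=
  in_Xi p1 p2 /\
  exists eps, 0 < eps /\
    forall x1 x2, in_Xi x1 x2 -> (x1 - p1) ^ 2 + (x2 - p2) ^ 2 < eps ^ 2 ->
      F_beta beta p1 p2 r <= F_beta beta x1 x2 r.

(* Main.v *)
Require Import Defs.
From Stdlib Require Import Reals Lra ClassicalEpsilon.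
From Coquelicot Require Import Coquelicot.
Open Scope R_scope.

Lemma ln_lt_sub1 z : 0 < z -> z <> 1 -> ln z < z - 1.
Proof.
  intros hz h1.
  assert (hl : ln z <> 0).
  { intro e. apply h1. rewrite <- (exp_ln z hz), e. apply exp_0. }
  generalize (exp_ineq1 _ hl). rewrite exp_ln by lra. lra.
Qed.

Lemma ln_le_sub1 z : 0 < z -> ln z <= z - 1.
Proof.
  intros hz. generalize (exp_ineq1_le (ln z)). rewrite exp_ln by lra. lra.
Qed.

Lemma ln_div' x z : 0 < x -> 0 < z -> ln (x / z) = ln x - ln z.
Proof.
  intros hx hz. unfold Rdiv. rewrite ln_mult, ln_Rinv; try lra.
  apply Rinv_0_lt_compat; lra.
Qed.

Lemma ln_sec x z : 0 < x < z -> (z - x) / z < ln z - ln x < (z - x) / x.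
Proof.
  intros [hx hxz].
  assert (hz : 0 < z) by lra.
  split.
  - assert (h := ln_lt_sub1 (x / z)).
    rewrite ln_div' in h by lra.
    assert (x / z <> 1).
    { intro e. apply Rmult_eq_compat_r with (r := z) in e.
      unfold Rdiv in e. rewrite Rmult_assoc, Rinv_l in e; lra. }
    assert (0 < x / z) by (apply Rdiv_lt_0_compat; lra).
    specialize (h H0 H).
    replace ((z - x) / z) with (1 - x / z) by (field; lra). lra.
  - assert (h := ln_lt_sub1 (z / x)).
    rewrite ln_div' in h by lra.
    assert (z / x <> 1).
    { intro e. apply Rmult_eq_compat_r with (r := x) in e.
      unfold Rdiv in e. rewrite Rmult_assoc, Rinv_l in e; lra. }
    assert (0 < z / x) by (apply Rdiv_lt_0_compat; lra).
    specialize (h H0 H).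
    replace ((z - x) / x) with (z / x - 1) by (field; lra). lra.
Qed.

Lemma mono_deriv (f f' : R -> R) a c :
  a <= c ->
  (forall x, a <= x <= c -> derivable_pt_lim f x (f' x)) ->
  (forall x, a < x < c -> 0 <= f' x) -> f a <= f c.
Proof.
  intros hac hd hp.
  destruct (Req_dec a c) as [e|ne]. { subst; lra. }
  destruct (MVT_cor2 f f' a c) as [x [e hx]]; try lra.
  { intros; apply hd; lra. }
  specialize (hp x hx). nra.
Qed.

Lemma ln_lb1 z : 1 <= z -> 2 * (z - 1) / (z + 1) <= ln z.
Proof.
  intros hz.
  assert (h := mono_deriv (fun z => ln z - 2*(z-1)/(z+1))
                 (fun z => / z - 4 / (z+1)^2) 1 z hz).
  cbv beta in h. rewrite ln_1 in h.
  assert (0 <= ln z - 2 * (z - 1) / (z + 1)); [|lra].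
  replace 0 with (0 - 2 * (1 - 1) / (1 + 1)) by field.
  apply h.
  - intros x hx. apply is_derive_Reals. auto_derive. lra. field. lra.
  - intros x hx.
    replace (/ x - 4 / (x + 1) ^ 2) with ((x-1)^2 / (x * (x+1)^2)) by (field; lra).
    apply Rdiv_le_0_compat. nra. apply Rmult_lt_0_compat; nra.
Qed.

Lemma ln_lb2 z : 0 < z <= 1 -> (z - / z) / 2 <= ln z.
Proof.
  intros hz.
  assert (h := mono_deriv (fun z => - (ln z - (z - / z) / 2))
                 (fun z => - (/ z - (1 + / z ^ 2) / 2)) z 1 (proj2 hz)).
  cbv beta in h. rewrite ln_1 in h.
  assert (0 <= ln z - (z - / z) / 2); [|lra].
  enough (- (ln z - (z - / z) / 2) <= - (0 - (1 - / 1) / 2)) by (rewrite Rinv_1 in H; lra).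
  apply h.
  - intros x hx. apply is_derive_Reals. auto_derive. repeat split; lra. field. lra.
  - intros x hx.
    replace (- (/ x - (1 + / x ^ 2) / 2)) with ((x-1)^2 / (2 * x^2)) by (field; lra).
    apply Rdiv_le_0_compat. nra. nra.
Qed.

Lemma xlog_lb x p : 0 < x -> 0 < p ->
  (x - p)^2 / (2 * (p + Rabs (x - p))) <= x * (ln x - ln p) - (x - p).
Proof.
  intros hx hp. rewrite <- ln_div' by lra.
  destruct (Rle_dec p x) as [hpx|hpx].
  - assert (h := ln_lb1 (x / p)).
    assert (1 <= x / p).
    { apply Rmult_le_reg_r with p; auto. unfold Rdiv. rewrite Rmult_assoc, Rinv_l; lra. }
    specialize (h H).
    rewrite Rabs_right by lra.
    replace (2 * (x / p - 1) / (x / p + 1)) with (2 * (x - p) / (x + p)) in h by (field; lra).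
    assert (x * (2 * (x - p) / (x + p)) - (x - p) = (x-p)^2/(x+p)) by (field; lra).
    assert ((x - p) ^ 2 / (2 * (p + (x - p))) <= (x-p)^2/(x+p)).
    { apply Rmult_le_compat_l. nra. apply Rinv_le_contravar; lra. }
    nra.
  - assert (h := ln_lb2 (x / p)).
    assert (x / p <= 1).
    { apply Rmult_le_reg_r with p; auto. unfold Rdiv. rewrite Rmult_assoc, Rinv_l; lra. }
    assert (0 < x / p) by (apply Rdiv_lt_0_compat; lra).
    specialize (h (conj H0 H)).
    rewrite Rabs_left by lra.
    replace ((x / p - / (x / p)) / 2) with ((x*x - p*p) / (2 * x * p)) in h by (field; lra).
    assert (x * ((x*x - p*p) / (2 * x * p)) - (x - p) = (x-p)^2/(2*p)) by (field; lra).
    assert ((x - p) ^ 2 / (2 * (p + - (x - p))) <= (x-p)^2/(2*p)).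
    { apply Rmult_le_compat_l. nra. apply Rinv_le_contravar; lra. }
    nra.
Qed.

Definition cont_on (f : R -> R) (u v : R) : Prop :=
  forall x, u <= x <= v -> forall eps, 0 < eps -> exists del, 0 < del /\
    forall y, u <= y <= v -> Rabs (y - x) < del -> Rabs (f y - f x) < eps.

Lemma first_up (f : R -> R) u v c :
  u <= v -> cont_on f u v -> f u < c -> c <= f v ->
  exists z, u < z <= v /\ f z = c /\ (forall w, u <= w < z -> f w < c).
Proof.
  intros huv hc hu hv.
  set (E := fun y => u <= y <= v /\ forall w, u <= w <= y -> f w < c).
  assert (hb : bound E). { exists v. intros y [hy _]. lra. }
  assert (he : exists y, E y).
  { exists u. split. lra. intros w hw. replace w with u by lra. auto. }
  destruct (completeness E hb he) as [z [hz1 hz2]].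
  assert (huz : u <= z). { apply hz1. destruct he as [y hy].
    split. lra. intros w hw. replace w with u by lra. auto. }
  assert (hzv : z <= v). { apply hz2. intros y [hy _]. lra. }
  assert (cl1 : forall w, u <= w < z -> f w < c).
  { intros w hw. destruct (Rlt_dec (f w) c) as [ok|nok]; auto. exfalso.
    assert (z <= w); [|lra]. apply hz2. intros y [hy1 hy2].
    destruct (Rle_dec y w) as [|n]; auto. exfalso. apply nok. apply hy2. lra. }
  assert (hfz : f z = c).
  { destruct (Rtotal_order (f z) c) as [lt|[eq|gt]]; auto; exfalso.
    - destruct (Req_dec z v) as [e|ne]. { subst. lra. }
      destruct (hc z (conj huz hzv) (c - f z)) as [d [hd hd']]. lra.
      set (z' := Rmin v (z + d/2)).
      assert (z < z'). { unfold z'. apply Rmin_case; lra. }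
      assert (z' <= z); [|lra]. apply hz1. split.
      + split. lra. unfold z'. apply Rmin_l.
      + intros w hw. destruct (Rlt_dec w z) as [l|nl]. apply cl1; lra.
        assert (w <= z + d/2) by (assert (z' <= z + d/2) by apply Rmin_r; lra).
        assert (Rabs (f w - f z) < c - f z).
        { apply hd'. split. lra. assert (z' <= v) by apply Rmin_l. lra.
          rewrite Rabs_right; lra. }
        rewrite Rabs_lt_between in H1. lra.
    - assert (u < z). { destruct (Req_dec u z) as [e|ne]. subst. lra. lra. }
      destruct (hc z (conj huz hzv) (f z - c)) as [d [hd hd']]. lra.
      set (w := Rmax u (z - d/2)).
      assert (w < z). { unfold w. apply Rmax_case; lra. }
      assert (u <= w) by apply Rmax_l.
      assert (z - d/2 <= w) by apply Rmax_r.
      assert (Rabs (f w - f z) < f z - c).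
      { apply hd'. lra. rewrite Rabs_left; lra. }
      rewrite Rabs_lt_between in H3. specialize (cl1 w). lra. }
  exists z. split; [|split]; auto.
  destruct (Req_dec u z) as [e|ne]. subst. lra. lra.
Qed.

Lemma cont_pt_eps f x : continuity_pt f x -> forall eps, 0 < eps -> exists del, 0 < del /\
    forall y, Rabs (y - x) < del -> Rabs (f y - f x) < eps.
Proof.
  intros h eps he. destruct (h eps he) as [d [hd hd']].
  exists d. split; auto. intros y hy.
  destruct (Req_dec x y) as [e|ne]. subst. rewrite Rminus_diag, Rabs_R0. lra.
  apply (hd' y). split. split. exact I. auto. exact hy.
Qed.

Lemma exp2_gt7 : 7 < exp 2.
Proof.
  assert (h1 : 21/20 < exp (1/20)) by (generalize (exp_ineq1 (1/20)); intros h; specialize (h ltac:(lra)); lra).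
  assert (e2 : exp (1/10) = exp (1/20) * exp (1/20)) by (rewrite <- exp_plus; f_equal; lra).
  assert (e3 : exp (1/5) = exp (1/10) * exp (1/10)) by (rewrite <- exp_plus; f_equal; lra).
  assert (e4 : exp (2/5) = exp (1/5) * exp (1/5)) by (rewrite <- exp_plus; f_equal; lra).
  assert (e5 : exp (4/5) = exp (2/5) * exp (2/5)) by (rewrite <- exp_plus; f_equal; lra).
  assert (e6 : exp (8/5) = exp (4/5) * exp (4/5)) by (rewrite <- exp_plus; f_equal; lra).
  assert (e7 : exp 2 = exp (8/5) * exp (2/5)) by (rewrite <- exp_plus; f_equal; lra).
  assert (a2 : 11025/10000 < exp (1/10)) by (rewrite e2; nra).
  assert (a3 : 1215/1000 < exp (1/5)) by (rewrite e3; nra).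
  assert (a4 : 1476/1000 < exp (2/5)) by (rewrite e4; nra).
  assert (a5 : 2178/1000 < exp (4/5)) by (rewrite e5; nra).
  assert (a6 : 4743/1000 < exp (8/5)) by (rewrite e6; nra).
  rewrite e7; nra.
Qed.

Lemma ln7_lt2 : ln 7 < 2.
Proof.
  rewrite <- (ln_exp 2). apply ln_increasing. lra. apply exp2_gt7.
Qed.

Lemma keyD s : 1/3 <= s <= 1 -> 0 <= ln s - ln (3 - 2*s) - 3*s + 3.
Proof.
  intros hs.
  set (m := fun s => ln s - ln (3 - 2*s) - 3*s + 3).
  set (m' := fun s => / s + 2 / (3 - 2*s) - 3).
  assert (hd : forall x, 1/3 <= x <= 1 -> derivable_pt_lim m x (m' x)).
  { intros x hx. unfold m, m'. apply is_derive_Reals. auto_derive. lra. field. lra. }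
  assert (hm' : forall x, 1/3 <= x <= 1 -> m' x = 3*(2*x-1)*(x-1)/(x*(3-2*x))).
  { intros x hx. unfold m'. field. lra. }
  change (0 <= m s).
  destruct (Rle_dec (1/2) s) as [h|h].
  - assert (h2 := mono_deriv (fun x => - m x) (fun x => - m' x) s 1 (proj2 hs)).
    cbv beta in h2. assert (m 1 = 0).
    { unfold m. replace (3 - 2*1) with 1 by lra. rewrite ln_1. lra. }
    enough (- m s <= - m 1) by lra. apply h2.
    + intros x hx. apply derivable_pt_lim_opp. apply hd. lra.
    + intros x hx. rewrite hm' by lra.
      assert (0 < x * (3 - 2*x)) by nra.
      assert (3 * (2 * x - 1) * (x - 1) / (x * (3 - 2 * x)) <= 0); [|lra].
      apply Rmult_le_reg_r with (x * (3 - 2 * x)); auto.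
      unfold Rdiv. rewrite Rmult_assoc, Rinv_l by lra. nra.
  - assert (h2 := mono_deriv m m' (1/3) s (proj1 hs)).
    assert (m (1/3) = 2 - ln 7).
    { unfold m. rewrite <- ln_div' by lra. replace (1/3/(3-2*(1/3))) with (/7) by field.
      rewrite ln_Rinv by lra. lra. }
    assert (0 < m (1/3)) by (generalize ln7_lt2; lra).
    enough (m (1/3) <= m s) by lra. apply h2.
    + intros x hx. apply hd. lra.
    + intros x hx. rewrite hm' by lra.
      assert (0 < x * (3 - 2*x)) by nra.
      apply Rmult_le_reg_r with (x * (3 - 2 * x)); auto.
      unfold Rdiv. rewrite Rmult_assoc, Rinv_l by lra. nra.
Qed.

Lemma l_pos b : 2 < b -> 0 < l_beta b.
Proof. intros hb. unfold l_beta. apply Rdiv_lt_0_compat; lra. Qed.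

Lemma bl b : 2 < b -> b * l_beta b = 2/3.
Proof. intros hb. unfold l_beta. field. lra. Qed.

Lemma l_third b : 2 < b -> 3 * l_beta b < 1.
Proof. intros hb. unfold l_beta.
  replace (3 * (2 / (3 * b))) with (2 / b) by (field; lra).
  apply Rmult_lt_reg_r with b. lra. unfold Rdiv. rewrite Rmult_assoc, Rinv_l; lra. Qed.

Lemma G_sec_lo b x z : 2 < b -> 0 < x < z ->
  (z - x) * (/ (b * z) - 3/2) < G_beta b z - G_beta b x.
Proof.
  intros hb hxz. destruct (ln_sec x z hxz) as [h1 h2].
  unfold G_beta.
  assert (e : (z - x) * (/ (b * z) - 3/2) = / b * ((z - x) / z) - 3/2 * (z - x)) by (field; lra).
  rewrite e.
  assert (/ b * ((z - x) / z) < / b * (ln z - ln x)).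
  { apply Rmult_lt_compat_l; auto. apply Rinv_0_lt_compat; lra. }
  lra.
Qed.

Lemma G_sec_hi b x z : 2 < b -> 0 < x < z ->
  G_beta b z - G_beta b x < (z - x) * (/ (b * x) - 3/2).
Proof.
  intros hb hxz. destruct (ln_sec x z hxz) as [h1 h2].
  unfold G_beta.
  assert (e : (z - x) * (/ (b * x) - 3/2) = / b * ((z - x) / x) - 3/2 * (z - x)) by (field; lra).
  rewrite e.
  assert (/ b * (ln z - ln x) < / b * ((z - x) / x)).
  { apply Rmult_lt_compat_l; auto. apply Rinv_0_lt_compat; lra. }
  lra.
Qed.

Lemma G_incr b x z : 2 < b -> 0 < x < z -> z <= l_beta b -> G_beta b x < G_beta b z.
Proof.
  intros hb hxz hz. assert (h := G_sec_lo b x z hb hxz).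
  assert (3/2 <= / (b * z)).
  { replace (3/2) with (/ (2/3)) by field. apply Rinv_le_contravar. nra.
    rewrite <- (bl b hb). apply Rmult_le_compat_l; lra. }
  nra.
Qed.

Lemma G_le b x z : 2 < b -> 0 < x <= z -> z <= l_beta b -> G_beta b x <= G_beta b z.
Proof.
  intros hb hxz hz. destruct (Req_dec x z). subst; lra.
  left. apply G_incr; auto; lra.
Qed.

Lemma G_decr b x z : 2 < b -> l_beta b <= x < z -> G_beta b z < G_beta b x.
Proof.
  intros hb hxz. assert (hl := l_pos b hb).
  assert (h := G_sec_hi b x z hb ltac:(lra)).
  assert (/ (b * x) <= 3/2).
  { replace (3/2) with (/ (2/3)) by field. apply Rinv_le_contravar. lra.
    rewrite <- (bl b hb). apply Rmult_le_compat_l; lra. }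
  nra.
Qed.

Lemma G_ge b x z : 2 < b -> l_beta b <= x <= z -> G_beta b z <= G_beta b x.
Proof.
  intros hb hxz. destruct (Req_dec x z). subst; lra.
  left. apply G_decr; auto; lra.
Qed.

Lemma cont_on_of_pt f u v : (forall x, u <= x <= v -> continuity_pt f x) -> cont_on f u v.
Proof.
  intros h x hx eps he. destruct (cont_pt_eps f x (h x hx) eps he) as [d [hd hd']].
  exists d. split; auto.
Qed.

Lemma G_cont b x : 2 < b -> 0 < x -> continuity_pt (G_beta b) x.
Proof.
  intros hb hx. apply derivable_continuous_pt.
  exists (/ b * / x - 3/2). apply is_derive_Reals. unfold G_beta. auto_derive. lra. ring.
Qed.

Lemma H_ex b y : 2 < b -> y <= g_beta b ->
  exists x, 0 < x <= l_beta b /\ G_beta b x = y.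
Proof.
  intros hb hy. assert (hl := l_pos b hb).
  set (x0 := exp (b * y)).
  assert (hx0 : 0 < x0) by apply exp_pos.
  assert (hG0 : G_beta b x0 < y).
  { unfold G_beta, x0. rewrite ln_exp. field_simplify; [|lra].
    assert (0 < exp (b*y)) by apply exp_pos. lra. }
  assert (hx0l : x0 < l_beta b).
  { unfold x0. rewrite <- (exp_ln (l_beta b)) by lra. apply exp_increasing.
    unfold g_beta, G_beta in hy.
    assert (y < / b * ln (l_beta b)) by lra.
    apply Rmult_lt_compat_l with (r := b) in H; [|lra].
    rewrite <- Rmult_assoc, Rinv_r, Rmult_1_l in H; lra. }
  destruct (first_up (G_beta b) x0 (l_beta b) y) as [z [hz1 [hz2 _]]]; try lra.
  - apply cont_on_of_pt. intros x hx. apply G_cont; lra.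
  - unfold g_beta in hy; lra.
  - exists z. split; [lra|auto].
Qed.

Lemma K_ex b y : 2 < b -> y <= g_beta b ->
  exists x, l_beta b <= x /\ G_beta b x = y.
Proof.
  intros hb hy. assert (hl := l_pos b hb).
  destruct (Req_dec y (g_beta b)) as [e|ne].
  { exists (l_beta b). split. lra. subst. reflexivity. }
  set (x1 := l_beta b + Rabs y + 1).
  assert (hG1 : G_beta b x1 < y).
  { assert (h := ln_le_sub1 x1). unfold x1 in *.
    assert (0 <= Rabs y) by apply Rabs_pos.
    assert (- y <= Rabs y) by (rewrite <- Rabs_Ropp; apply RRle_abs).
    unfold G_beta.
    assert (/ b * ln (l_beta b + Rabs y + 1) <= / b * (l_beta b + Rabs y + 1 - 1)).
    { apply Rmult_le_compat_l. left; apply Rinv_0_lt_compat; lra. apply h; lra. }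
    assert (/ b < / 2) by (apply Rinv_lt_contravar; lra).
    assert (/ b * (l_beta b + Rabs y + 1 - 1) <= / 2 * (l_beta b + Rabs y)).
    { replace (l_beta b + Rabs y + 1 - 1) with (l_beta b + Rabs y) by ring.
      apply Rmult_le_compat_r; lra. }
    lra. }
  destruct (first_up (fun x => - G_beta b x) (l_beta b) x1 (- y)) as [z [hz1 [hz2 _]]].
  - unfold x1. assert (0 <= Rabs y) by apply Rabs_pos. lra.
  - apply cont_on_of_pt. intros x hx. apply continuity_pt_opp. apply G_cont; lra.
  - fold (g_beta b). lra.
  - lra.
  - exists z. split; lra.
Qed.

Lemma H_spec b y : 2 < b -> y <= g_beta b ->
  0 < H_beta b y <= l_beta b /\ G_beta b (H_beta b y) = y.
Proof. intros hb hy. unfold H_beta. apply epsilon_spec. apply H_ex; auto. Qed.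

Lemma K_spec b y : 2 < b -> y <= g_beta b ->
  l_beta b <= K_beta b y /\ G_beta b (K_beta b y) = y.
Proof. intros hb hy. unfold K_beta. apply epsilon_spec. apply K_ex; auto. Qed.

Lemma H_uniq b x y : 2 < b -> 0 < x <= l_beta b -> G_beta b x = y -> H_beta b y = x.
Proof.
  intros hb hx hG.
  assert (hy : y <= g_beta b) by (subst; apply G_le; lra).
  destruct (H_spec b y hb hy) as [h1 h2].
  destruct (Rtotal_order (H_beta b y) x) as [lt|[eq|gt]]; auto; exfalso.
  - assert (G_beta b (H_beta b y) < G_beta b x) by (apply G_incr; lra). lra.
  - assert (G_beta b x < G_beta b (H_beta b y)) by (apply G_incr; lra). lra.
Qed.

Lemma K_uniq b x y : 2 < b -> l_beta b <= x -> G_beta b x = y -> K_beta b y = x.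
Proof.
  intros hb hx hG.
  assert (hy : y <= g_beta b) by (subst; apply G_ge; lra).
  destruct (K_spec b y hb hy) as [h1 h2].
  destruct (Rtotal_order (K_beta b y) x) as [lt|[eq|gt]]; auto; exfalso.
  - assert (G_beta b x < G_beta b (K_beta b y)) by (apply G_decr; lra). lra.
  - assert (G_beta b (K_beta b y) < G_beta b x) by (apply G_decr; lra). lra.
Qed.

Lemma H_mono b y y' : 2 < b -> y < y' -> y' <= g_beta b -> H_beta b y < H_beta b y'.
Proof.
  intros hb hyy hy'.
  destruct (H_spec b y hb ltac:(lra)) as [h1 h2].
  destruct (H_spec b y' hb ltac:(lra)) as [h1' h2'].
  destruct (Rlt_dec (H_beta b y) (H_beta b y')) as [ok|nok]; auto; exfalso.
  assert (G_beta b (H_beta b y') <= G_beta b (H_beta b y)) by (apply G_le; lra). lra.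
Qed.

Lemma K_mono b y y' : 2 < b -> y < y' -> y' <= g_beta b -> K_beta b y' < K_beta b y.
Proof.
  intros hb hyy hy'.
  destruct (K_spec b y hb ltac:(lra)) as [h1 h2].
  destruct (K_spec b y' hb ltac:(lra)) as [h1' h2'].
  destruct (Rlt_dec (K_beta b y') (K_beta b y)) as [ok|nok]; auto; exfalso.
  assert (G_beta b (K_beta b y') <= G_beta b (K_beta b y)) by (apply G_ge; lra). lra.
Qed.

Lemma H_lt b y : 2 < b -> y < g_beta b -> H_beta b y < l_beta b.
Proof.
  intros hb hy. destruct (H_spec b y hb ltac:(lra)) as [h1 h2].
  destruct (Req_dec (H_beta b y) (l_beta b)) as [e|ne]; [|lra].
  rewrite e in h2. unfold g_beta in hy. lra.
Qed.

Lemma K_gt b y : 2 < b -> y < g_beta b -> l_beta b < K_beta b y.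
Proof.
  intros hb hy. destruct (K_spec b y hb ltac:(lra)) as [h1 h2].
  destruct (Req_dec (K_beta b y) (l_beta b)) as [e|ne]; [|lra].
  rewrite e in h2. unfold g_beta in hy. lra.
Qed.

Lemma H_g b : 2 < b -> H_beta b (g_beta b) = l_beta b.
Proof. intros hb. apply H_uniq; auto. split. apply l_pos; auto. lra. Qed.

Lemma K_g b : 2 < b -> K_beta b (g_beta b) = l_beta b.
Proof. intros hb. apply K_uniq; auto. lra. Qed.

Lemma H_cont b y0 eps : 2 < b -> y0 <= g_beta b -> 0 < eps -> exists del, 0 < del /\
  forall y, y <= g_beta b -> Rabs (y - y0) < del -> Rabs (H_beta b y - H_beta b y0) < eps.
Proof.
  intros hb hy0 he.
  destruct (H_spec b y0 hb hy0) as [[h0p h0l] hG0].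
  set (h0 := H_beta b y0) in *.
  set (e := Rmin eps (h0/2)).
  assert (he1 : 0 < e) by (unfold e; apply Rmin_case; lra).
  assert (he2 : e <= eps) by apply Rmin_l.
  assert (he3 : e <= h0/2) by apply Rmin_r.
  assert (hlo : G_beta b (h0 - e) < y0) by (rewrite <- hG0; apply G_incr; lra).
  set (d1 := y0 - G_beta b (h0 - e)).
  destruct (Rle_dec (h0 + e) (l_beta b)) as [hup|hup].
  - assert (hhi : y0 < G_beta b (h0 + e)) by (rewrite <- hG0; apply G_incr; lra).
    exists (Rmin d1 (G_beta b (h0 + e) - y0)). split.
    { apply Rmin_case; unfold d1; lra. }
    intros y hy hyd.
    assert (hd1 : Rabs (y - y0) < d1) by (eapply Rlt_le_trans; [apply hyd|apply Rmin_l]).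
    assert (hd2 : Rabs (y - y0) < G_beta b (h0 + e) - y0)
      by (eapply Rlt_le_trans; [apply hyd|apply Rmin_r]).
    rewrite Rabs_lt_between in hd1, hd2.
    destruct (H_spec b y hb hy) as [[hp hl] hG].
    assert (h0 - e < H_beta b y).
    { destruct (Rlt_dec (h0 - e) (H_beta b y)) as [ok|nok]; auto.
      assert (G_beta b (H_beta b y) <= G_beta b (h0 - e)) by (apply G_le; lra).
      unfold d1 in hd1. lra. }
    assert (H_beta b y < h0 + e).
    { destruct (Rlt_dec (H_beta b y) (h0 + e)) as [ok|nok]; auto.
      assert (G_beta b (h0 + e) <= G_beta b (H_beta b y)) by (apply G_le; lra).
      lra. }
    rewrite Rabs_lt_between. lra.
  - exists d1. split. unfold d1; lra.
    intros y hy hyd. rewrite Rabs_lt_between in hyd.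
    destruct (H_spec b y hb hy) as [[hp hl] hG].
    assert (h0 - e < H_beta b y).
    { destruct (Rlt_dec (h0 - e) (H_beta b y)) as [ok|nok]; auto.
      assert (G_beta b (H_beta b y) <= G_beta b (h0 - e)) by (apply G_le; lra).
      unfold d1 in hyd. lra. }
    rewrite Rabs_lt_between. lra.
Qed.

Lemma K_cont b y0 eps : 2 < b -> y0 <= g_beta b -> 0 < eps -> exists del, 0 < del /\
  forall y, y <= g_beta b -> Rabs (y - y0) < del -> Rabs (K_beta b y - K_beta b y0) < eps.
Proof.
  intros hb hy0 he.
  destruct (K_spec b y0 hb hy0) as [h0l hG0].
  set (k0 := K_beta b y0) in *.
  assert (hhi : G_beta b (k0 + eps) < y0) by (rewrite <- hG0; apply G_decr; lra).
  set (d1 := y0 - G_beta b (k0 + eps)).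
  destruct (Rle_dec (l_beta b) (k0 - eps)) as [hup|hup].
  - assert (hlo : y0 < G_beta b (k0 - eps)) by (rewrite <- hG0; apply G_decr; lra).
    exists (Rmin d1 (G_beta b (k0 - eps) - y0)). split.
    { apply Rmin_case; unfold d1; lra. }
    intros y hy hyd.
    assert (hd1 : Rabs (y - y0) < d1) by (eapply Rlt_le_trans; [apply hyd|apply Rmin_l]).
    assert (hd2 : Rabs (y - y0) < G_beta b (k0 - eps) - y0)
      by (eapply Rlt_le_trans; [apply hyd|apply Rmin_r]).
    rewrite Rabs_lt_between in hd1, hd2.
    destruct (K_spec b y hb hy) as [hl hG].
    assert (K_beta b y < k0 + eps).
    { destruct (Rlt_dec (K_beta b y) (k0 + eps)) as [ok|nok]; auto.
      assert (G_beta b (K_beta b y) <= G_beta b (k0 + eps)) by (apply G_ge; lra).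
      unfold d1 in hd1. lra. }
    assert (k0 - eps < K_beta b y).
    { destruct (Rlt_dec (k0 - eps) (K_beta b y)) as [ok|nok]; auto.
      assert (G_beta b (k0 - eps) <= G_beta b (K_beta b y)) by (apply G_ge; lra).
      lra. }
    rewrite Rabs_lt_between. lra.
  - exists d1. split. unfold d1; lra.
    intros y hy hyd. rewrite Rabs_lt_between in hyd.
    destruct (K_spec b y hb hy) as [hl hG].
    assert (K_beta b y < k0 + eps).
    { destruct (Rlt_dec (K_beta b y) (k0 + eps)) as [ok|nok]; auto.
      assert (G_beta b (K_beta b y) <= G_beta b (k0 + eps)) by (apply G_ge; lra).
      unfold d1 in hyd. lra. }
    rewrite Rabs_lt_between. lra.
Qed.

Lemma key_ineq b a bb c : 2 < b -> 0 < a < bb -> bb < l_beta b -> l_beta b < c ->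
  a + bb + c = 1 -> G_beta b bb = G_beta b c ->
  a / (l_beta b - a) + bb / (l_beta b - bb) + c / (l_beta b - c) < 0.
Proof.
  intros hb ha hbl hc hs hG.
  assert (hl := l_pos b hb). assert (h3 := l_third b hb).
  set (l := l_beta b) in *.
  destruct (Rle_dec bb (l/3)) as [small|big].
  - assert (e : a / (l - a) + bb / (l - bb) + c / (l - c) =
              l * (a - bb) * / ((l - a) * (l - bb)) +
              (2 * bb * l + c * (l - 3 * bb)) * / ((l - bb) * (l - c))) by (field; lra).
    rewrite e.
    assert (0 < / ((l - a) * (l - bb))) by (apply Rinv_0_lt_compat; nra).
    assert (/ ((l - bb) * (l - c)) < 0) by (apply Rinv_lt_0_compat; nra).
    assert (l * (a - bb) < 0) by nra.
    assert (0 <= 2 * bb * l + c * (l - 3 * bb)) by nra.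
    nra.
  - exfalso.
    assert (hc' : 3 * l - 2 * bb < c) by lra.
    assert (G_beta b c < G_beta b (3 * l - 2 * bb)) by (apply G_decr; [auto | fold l; lra]).
    set (s := bb / l).
    assert (ebb : bb = s * l) by (unfold s; field; lra).
    assert (hs1 : 1/3 <= s <= 1) by (split; nra).
    assert (hD := keyD s hs1).
    assert (e3 : 3 * l - 2 * bb = (3 - 2 * s) * l) by (rewrite ebb; ring).
    assert (0 < s) by (unfold s; apply Rdiv_lt_0_compat; lra).
    assert (0 < 3 - 2 * s) by lra.
    rewrite <- hG in H. unfold G_beta in H. rewrite e3, ebb in H.
    rewrite !ln_mult in H by lra.
    assert (eb : / b = 3/2 * l) by (unfold l, l_beta; field; lra).
    rewrite eb in H.
    assert (l * (ln s - ln (3 - 2*s) - 3*s + 3) < 0) by nra.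
    nra.
Qed.

Definition ee b p eta := / (b * (p + eta)) - 3/2.

Lemma ee_inv b x : 2 < b -> 0 < x -> x <> l_beta b ->
  / (/ (b * x) - 3/2) = 2 * x / (3 * (l_beta b - x)).
Proof.
  intros hb hx hxl. unfold l_beta in *.
  assert (2 - 3 * b * x <> 0).
  { intro e. apply hxl. field_simplify; try lra. 
    apply Rmult_eq_reg_r with (3*b). 2: lra. field_simplify; lra. }
  field. repeat split; try lra.
Qed.

Lemma eta_lemma b p0 p1 p2 : 2 < b -> 0 < p0 < l_beta b -> 0 < p1 < l_beta b ->
  l_beta b < p2 ->
  p0 / (l_beta b - p0) + p1 / (l_beta b - p1) + p2 / (l_beta b - p2) < 0 ->
  exists del, 0 < del /\ forall eta, 0 < eta < del ->
    0 < ee b p0 eta /\ 0 < ee b p1 eta /\ ee b p2 eta < 0 /\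
    / ee b p0 eta + / ee b p1 eta + / ee b p2 eta < 0.
Proof.
  intros hb h0 h1 h2 hS.
  assert (hl := l_pos b hb). set (l := l_beta b) in *.
  set (Phi := fun eta => 2 * (p0 + eta) / (3 * (l - (p0 + eta))) +
                        2 * (p1 + eta) / (3 * (l - (p1 + eta))) +
                        2 * (p2 + eta) / (3 * (l - (p2 + eta)))).
  assert (hP0 : Phi 0 < 0).
  { unfold Phi. rewrite !Rplus_0_r.
    assert (e : 2 * p0 / (3 * (l - p0)) + 2 * p1 / (3 * (l - p1)) + 2 * p2 / (3 * (l - p2))
             = 2/3 * (p0 / (l - p0) + p1 / (l - p1) + p2 / (l - p2))) by (field; lra).
    rewrite e. lra. }
  assert (hc : continuity_pt Phi 0).
  { apply derivable_continuous_pt. eexists. apply is_derive_Reals. unfold Phi.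
    auto_derive. repeat split; lra. reflexivity. }
  destruct (cont_pt_eps Phi 0 hc (- Phi 0)) as [d [hd hd']]. lra.
  exists (Rmin d (Rmin (l - p0) (l - p1))). split.
  { repeat apply Rmin_case; lra. }
  intros eta [he1 he2].
  assert (eta < d) by (eapply Rlt_le_trans; [apply he2|apply Rmin_l]).
  assert (eta < l - p0).
  { eapply Rlt_le_trans; [apply he2|]. eapply Rle_trans; [apply Rmin_r|apply Rmin_l]. }
  assert (eta < l - p1).
  { eapply Rlt_le_trans; [apply he2|]. eapply Rle_trans; [apply Rmin_r|apply Rmin_r]. }
  assert (hpos : forall p, 0 < p -> p + eta < l -> 0 < ee b p eta).
  { intros p hp hpe. unfold ee.
    assert (3/2 < / (b * (p + eta))); [|lra].
    replace (3/2) with (/ (b * l)) by (unfold l; rewrite bl; [field|lra]).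
    apply Rinv_lt_contravar. apply Rmult_lt_0_compat; apply Rmult_lt_0_compat; lra. apply Rmult_lt_compat_l; lra. }
  assert (hneg : ee b p2 eta < 0).
  { unfold ee. assert (/ (b * (p2 + eta)) < 3/2); [|lra].
    replace (3/2) with (/ (b * l)) by (unfold l; rewrite bl; [field|lra]).
    apply Rinv_lt_contravar. apply Rmult_lt_0_compat; apply Rmult_lt_0_compat; lra. apply Rmult_lt_compat_l; lra. }
  split; [apply hpos; lra|]. split; [apply hpos; lra|]. split; auto.
  unfold ee. rewrite !ee_inv; auto; try (fold l; lra).
  assert (h := hd' eta ltac:(rewrite Rminus_0_r, Rabs_right; lra)).
  rewrite Rabs_lt_between in h. unfold Phi in h. fold l. lra. 
Qed.

Lemma branch b x x0 eta : 2 < b -> 0 < x -> 0 < x0 -> x <> x0 -> 0 < eta ->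
  Rabs (x - x0) < eta ->
  (0 < ee b x0 eta \/ (l_beta b <= x /\ l_beta b <= x0 /\ ee b x0 eta < 0)) ->
  exists w, w < / ee b x0 eta /\ x - x0 = (G_beta b x - G_beta b x0) * w.
Proof.
  intros hb hx hx0 hne he hd hcase.
  rewrite Rabs_lt_between in hd.
  set (s := (G_beta b x - G_beta b x0) / (x - x0)).
  assert (es : G_beta b x - G_beta b x0 = s * (x - x0)) by (unfold s; field; lra).
  assert (hs : ee b x0 eta < s).
  { unfold ee. destruct (Rlt_dec x0 x) as [lt|nlt].
    - assert (h := G_sec_lo b x0 x hb ltac:(lra)).
      assert (/ (b * (x0 + eta)) < / (b * x)).
      { apply Rinv_lt_contravar. apply Rmult_lt_0_compat; apply Rmult_lt_0_compat; lra.
        apply Rmult_lt_compat_l; lra. }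
      assert (/ (b * x) - 3/2 < s); [|lra].
      apply Rmult_lt_reg_r with (x - x0). lra. lra.
    - assert (h := G_sec_lo b x x0 hb ltac:(lra)).
      assert (/ (b * (x0 + eta)) < / (b * x0)).
      { apply Rinv_lt_contravar. apply Rmult_lt_0_compat; apply Rmult_lt_0_compat; lra.
        apply Rmult_lt_compat_l; lra. }
      assert (/ (b * x0) - 3/2 < s); [|lra].
      apply Rmult_lt_reg_r with (x0 - x). lra. lra. }
  assert (hprod : 0 < ee b x0 eta * s).
  { destruct hcase as [hp | [h1 [h2 hn]]].
    - apply Rmult_lt_0_compat; lra.
    - assert (s < 0).
      { destruct (Rlt_dec x0 x) as [lt|nlt].
        + assert (G_beta b x < G_beta b x0) by (apply G_decr; lra). nra.
        + assert (G_beta b x0 < G_beta b x) by (apply G_decr; lra). nra. }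
      nra. }
  assert (s <> 0) by (intro e; rewrite e in hprod; lra).
  exists (/ s). split.
  - apply Rinv_lt_contravar; auto.
  - rewrite es. field. auto.
Qed.

Definition phi b r y := H_beta b (y - 3 * r / 2) + H_beta b y + K_beta b y.

Lemma phi_g b r : 2 < b -> 0 < r -> phi b r (g_beta b) < 1.
Proof.
  intros hb hr. unfold phi. rewrite H_g, K_g by auto.
  assert (H_beta b (g_beta b - 3 * r / 2) < l_beta b) by (apply H_lt; lra).
  assert (h := l_third b hb). lra.
Qed.

Lemma phi_cont b r u v : 2 < b -> 0 < r -> v <= g_beta b -> cont_on (phi b r) u v.
Proof.
  intros hb hr hv x hx eps he.
  destruct (H_cont b (x - 3 * r / 2) (eps/3) hb ltac:(lra) ltac:(lra)) as [d1 [hd1 h1]].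
  destruct (H_cont b x (eps/3) hb ltac:(lra) ltac:(lra)) as [d2 [hd2 h2]].
  destruct (K_cont b x (eps/3) hb ltac:(lra) ltac:(lra)) as [d3 [hd3 h3]].
  exists (Rmin d1 (Rmin d2 d3)). split. { repeat apply Rmin_case; lra. }
  intros y hy hyd.
  assert (Rabs (y - x) < d1) by (eapply Rlt_le_trans; [apply hyd|apply Rmin_l]).
  assert (Rabs (y - x) < d2).
  { eapply Rlt_le_trans; [apply hyd|]. eapply Rle_trans; [apply Rmin_r|apply Rmin_l]. }
  assert (Rabs (y - x) < d3).
  { eapply Rlt_le_trans; [apply hyd|]. eapply Rle_trans; [apply Rmin_r|apply Rmin_r]. }
  specialize (h1 (y - 3 * r / 2) ltac:(lra)
    ltac:(replace (y - 3 * r / 2 - (x - 3 * r / 2)) with (y - x) by ring; auto)).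
  specialize (h2 y ltac:(lra) H0). specialize (h3 y ltac:(lra) H1).
  unfold phi.
  rewrite Rabs_lt_between in h1, h2, h3 |- *. lra.
Qed.

Lemma cross b r y0 : 2 < b -> 0 < r -> y0 <= g_beta b -> phi b r y0 = 1 ->
  exists del, 0 < del /\ forall y, y <= g_beta b -> Rabs (y - y0) < del -> y <> y0 ->
    (phi b r y - 1) * (y - y0) < 0.
Proof.
  intros hb hr hy0 hphi.
  assert (hg : y0 < g_beta b).
  { destruct (Req_dec y0 (g_beta b)) as [e|ne]; [|lra].
    subst. generalize (phi_g b r hb hr). lra. }
  assert (hl := l_pos b hb).
  set (ya := y0 - 3 * r / 2).
  destruct (H_spec b ya hb ltac:(unfold ya; lra)) as [[ha0 _] hGa0].
  destruct (H_spec b y0 hb hy0) as [[hb0 _] hGb0].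
  destruct (K_spec b y0 hb hy0) as [_ hGc0].
  assert (hab : H_beta b ya < H_beta b y0) by (apply H_mono; unfold ya; lra).
  assert (hbl : H_beta b y0 < l_beta b) by (apply H_lt; lra).
  assert (hcl : l_beta b < K_beta b y0) by (apply K_gt; lra).
  assert (hsum : H_beta b ya + H_beta b y0 + K_beta b y0 = 1) by (unfold phi in hphi; exact hphi).
  assert (hk := key_ineq b (H_beta b ya) (H_beta b y0) (K_beta b y0) hb
                 ltac:(lra) hbl hcl hsum ltac:(congruence)).
  destruct (eta_lemma b (H_beta b ya) (H_beta b y0) (K_beta b y0) hb
              ltac:(lra) ltac:(lra) hcl hk) as [de [hde hde']].
  set (eta := de / 2).
  destruct (hde' eta ltac:(unfold eta; lra)) as [e0 [e1 [e2 eS]]].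
  destruct (H_cont b ya eta hb ltac:(unfold ya; lra) ltac:(unfold eta; lra)) as [d1 [hd1 h1]].
  destruct (H_cont b y0 eta hb hy0 ltac:(unfold eta; lra)) as [d2 [hd2 h2]].
  destruct (K_cont b y0 eta hb hy0 ltac:(unfold eta; lra)) as [d3 [hd3 h3]].
  exists (Rmin d1 (Rmin d2 d3)). split. { repeat apply Rmin_case; lra. }
  intros y hy hyd hne.
  assert (Rabs (y - y0) < d1) by (eapply Rlt_le_trans; [apply hyd|apply Rmin_l]).
  assert (Rabs (y - y0) < d2).
  { eapply Rlt_le_trans; [apply hyd|]. eapply Rle_trans; [apply Rmin_r|apply Rmin_l]. }
  assert (Rabs (y - y0) < d3).
  { eapply Rlt_le_trans; [apply hyd|]. eapply Rle_trans; [apply Rmin_r|apply Rmin_r]. }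
  specialize (h1 (y - 3 * r / 2) ltac:(lra)
    ltac:(unfold ya; replace (y - 3 * r / 2 - (y0 - 3 * r / 2)) with (y - y0) by ring; auto)).
  specialize (h2 y hy H0). specialize (h3 y hy H1).
  destruct (H_spec b (y - 3 * r / 2) hb ltac:(lra)) as [[ha _] hGa].
  destruct (H_spec b y hb hy) as [[hbp _] hGb].
  destruct (K_spec b y hb hy) as [hcp hGc].
  assert (hea : eta > 0) by (unfold eta; lra).
  destruct (branch b (H_beta b (y - 3 * r / 2)) (H_beta b ya) eta hb ha ha0
     ltac:(intro e; apply hne; assert (G_beta b (H_beta b (y - 3 * r / 2)) = G_beta b (H_beta b ya)) by (rewrite e; auto); unfold ya in *; lra)
     hea h1 (or_introl e0)) as [wa [hwa ea]].
  destruct (branch b (H_beta b y) (H_beta b y0) eta hb hbp hb0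
     ltac:(intro e; apply hne; assert (G_beta b (H_beta b y) = G_beta b (H_beta b y0)) by (rewrite e; auto); lra)
     hea h2 (or_introl e1)) as [wb [hwb eb]].
  destruct (branch b (K_beta b y) (K_beta b y0) eta hb ltac:(lra) ltac:(lra)
     ltac:(intro e; apply hne; assert (G_beta b (K_beta b y) = G_beta b (K_beta b y0)) by (rewrite e; auto); lra)
     hea h3 (or_intror (conj hcp (conj (Rlt_le _ _ hcl) e2)))) as [wc [hwc ec]].
  rewrite hGa, hGa0 in ea. rewrite hGb, hGb0 in eb. rewrite hGc, hGc0 in ec.
  assert (eya : y - 3 * r / 2 - ya = y - y0) by (unfold ya; ring).
  rewrite eya in ea.
  assert (ephi : phi b r y - 1 = (y - y0) * (wa + wb + wc)).
  { unfold phi. rewrite <- hsum. rewrite !Rmult_plus_distr_l. lra. }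
  rewrite ephi.
  assert (wa + wb + wc < 0) by lra.
  assert (0 < (y - y0) * (y - y0)).
  { destruct (Rlt_dec y y0); nra. }
  nra.
Qed.

Lemma uniq_root b r y1 y2 : 2 < b -> 0 < r -> y1 <= g_beta b -> y2 <= g_beta b ->
  phi b r y1 = 1 -> phi b r y2 = 1 -> y1 < y2 -> False.
Proof.
  intros hb hr h1 h2 p1 p2 hlt.
  destruct (cross b r y1 hb hr h1 p1) as [d [hd hd']].
  set (u := y1 + Rmin d (y2 - y1) / 2).
  assert (hm1 : Rmin d (y2 - y1) <= d) by apply Rmin_l.
  assert (hm2 : Rmin d (y2 - y1) <= y2 - y1) by apply Rmin_r.
  assert (hm3 : 0 < Rmin d (y2 - y1)) by (apply Rmin_case; lra).
  assert (hu : phi b r u < 1).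
  { assert (h := hd' u ltac:(unfold u; lra) ltac:(unfold u; rewrite Rabs_right; lra)
                   ltac:(unfold u; lra)).
    assert (0 < u - y1) by (unfold u; lra). nra. }
  destruct (first_up (phi b r) u y2 1 ltac:(unfold u; lra) (phi_cont b r u y2 hb hr h2)
              hu ltac:(lra)) as [z [hz1 [hz2 hz3]]].
  destruct (cross b r z hb hr ltac:(lra) hz2) as [d' [hd1 hd1']].
  set (w := Rmax u (z - d'/2)).
  assert (u <= w) by apply Rmax_l.
  assert (z - d'/2 <= w) by apply Rmax_r.
  assert (w < z) by (unfold w; apply Rmax_case; lra).
  assert (hw1 := hz3 w ltac:(lra)).
  assert (hw2 := hd1' w ltac:(lra) ltac:(rewrite Rabs_left; lra) ltac:(lra)).
  nra.
Qed.

Lemma exist_root b r : 2 < b -> 0 < r ->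
  exists y, y <= g_beta b /\ phi b r y = 1.
Proof.
  intros hb hr.
  assert (hl := l_pos b hb). assert (h3 := l_third b hb).
  set (lo := G_beta b 1).
  assert (hlo : lo <= g_beta b) by (unfold lo, g_beta; apply G_ge; lra).
  assert (hK : K_beta b lo = 1) by (apply K_uniq; auto; lra).
  assert (hplo : 1 < phi b r lo).
  { unfold phi. rewrite hK.
    destruct (H_spec b (lo - 3 * r / 2) hb ltac:(lra)) as [[? _] _].
    destruct (H_spec b lo hb hlo) as [[? _] _]. lra. }
  assert (hpg := phi_g b r hb hr).
  destruct (first_up (fun y => 2 - phi b r y) lo (g_beta b) 1 hlo) as [z [hz1 [hz2 _]]].
  - intros x hx eps he.
    destruct (phi_cont b r lo (g_beta b) hb hr ltac:(lra) x hx eps he) as [d [hd hd']].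
    exists d. split; auto. intros y hy hyd. specialize (hd' y hy hyd).
    replace (2 - phi b r y - (2 - phi b r x)) with (- (phi b r y - phi b r x)) by ring.
    rewrite Rabs_Ropp. auto.
  - lra.
  - lra.
  - exists z. split. lra. lra.
Qed.

Lemma vals : vx 0 = 1 /\ vy 0 = 0 /\ vx 1 = -1/2 /\ vy 1 = sqrt 3 / 2 /\
             vx 2 = -1/2 /\ vy 2 = - (sqrt 3 / 2).
Proof.
  unfold vx, vy.
  replace (2 * PI * 0 / 3) with 0 by field.
  replace (2 * PI * 1 / 3) with (PI - PI / 3) by field.
  replace (2 * PI * 2 / 3) with (PI / 3 + PI) by field.
  rewrite cos_0, sin_0, Rtrigo_facts.cos_pi_minus, sin_PI_x, neg_cos, neg_sin, cos_PI3, sin_PI3.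
  repeat split; field.
Qed.

Lemma F_simpl b x1 x2 r : 2 < b -> 0 < 1 - x1 - x2 -> 0 < x1 -> 0 < x2 ->
  F_beta b x1 x2 r =
   - 3/4 * ((1 - x1 - x2)^2 + x1^2 + x2^2) + 1/4
   + / b * (ln 3 + (1 - x1 - x2) * ln (1 - x1 - x2) + x1 * ln x1 + x2 * ln x2)
   + r * (1 - x1 - x2) - r / 2 * (x1 + x2).
Proof.
  intros hb h0 h1 h2.
  destruct vals as [v0 [w0 [v1 [w1 [v2 w2]]]]].
  unfold F_beta, xlog3x. rewrite v0, w0, v1, w1, v2, w2.
  rewrite !ln_mult by lra.
  assert (hs : sqrt 3 * sqrt 3 = 3) by (apply sqrt_sqrt; lra).
  set (s3 := sqrt 3) in *. set (L3 := ln 3).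
  set (x0 := 1 - x1 - x2) in *.
  replace (x0 * 1 + x1 * (-1/2) + x2 * (-1/2)) with (x0 - (x1 + x2)/2) by field.
  replace (x0 * 0 + x1 * (s3 / 2) + x2 * - (s3 / 2)) with (s3 / 2 * (x1 - x2)) by field.
  replace ((s3 / 2 * (x1 - x2)) ^ 2) with (s3 * s3 / 4 * (x1 - x2)^2) by field.
  rewrite hs. unfold x0. field. lra.
Qed.

Lemma quad_form e0 e1 e2 h0 h1 h2 : 0 < e0 -> 0 < e1 -> e2 < 0 ->
  / e0 + / e1 + / e2 < 0 -> h0 + h1 + h2 = 0 ->
  0 <= e0 * h0^2 + e1 * h1^2 + e2 * h2^2.
Proof.
  intros p0 p1 n2 hs hh.
  set (w0 := / e0) in *. set (w1 := / e1) in *. set (w2 := / e2) in *.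
  assert (hw0 : e0 * w0 = 1) by (unfold w0; field; lra).
  assert (hw1 : e1 * w1 = 1) by (unfold w1; field; lra).
  assert (hw2 : e2 * w2 = 1) by (unfold w2; field; lra).
  assert (0 < w0) by (unfold w0; apply Rinv_0_lt_compat; lra).
  assert (0 < w1) by (unfold w1; apply Rinv_0_lt_compat; lra).
  assert (w2 < 0) by (unfold w2; apply Rinv_lt_0_compat; lra).
  set (Q := e0 * h0^2 + e1 * h1^2).
  assert (hQ : 0 <= Q) by (unfold Q; nra).
  assert (id : Q * (w0 + w1) - (h0 + h1)^2 = w0 * w1 * (e0 * h0 - e1 * h1)^2).
  { unfold Q. replace (e0 * h0 ^ 2 + e1 * h1 ^ 2) with (e0 * h0 ^ 2 + e1 * h1 ^ 2) by ring.
    transitivity (w0 * w1 * (e0 * h0 - e1 * h1)^2 + (e0 * w0 - 1) * (w1 * e1 * h1 ^ 2 + h1^2 + 0) * 0).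
    2: ring.
    assert (e0 = / w0) by (unfold w0; rewrite Rinv_inv; auto).
    assert (e1 = / w1) by (unfold w1; rewrite Rinv_inv; auto).
    subst Q. rewrite H2, H3. field. split; lra. }
  assert (c1 : (h0 + h1)^2 <= Q * (w0 + w1)).
  { assert (0 <= w0 * w1 * (e0 * h0 - e1 * h1)^2).
    { apply Rmult_le_pos. apply Rmult_le_pos; lra. apply pow2_ge_0. }
    lra. }
  assert (c2 : Q * (w0 + w1) <= Q * (- w2)) by (apply Rmult_le_compat_l; lra).
  replace h2 with (- (h0 + h1)) by lra.
  assert (- e2 * (h0 + h1)^2 <= - e2 * (Q * (- w2))).
  { apply Rmult_le_compat_l; lra. }
  replace (- e2 * (Q * - w2)) with (Q * (e2 * w2)) in H2 by ring.
  rewrite hw2 in H2. unfold Q in H2. nra.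
Qed.

Lemma sq_abs a e : 0 < e -> a^2 < e^2 -> Rabs a < e.
Proof.
  intros he h. destruct (Rcase_abs a).
  - rewrite Rabs_left by lra. nra.
  - rewrite Rabs_right by lra. nra.
Qed.

Lemma term_lb b p x eta : 2 < b -> 0 < p -> 0 < x -> Rabs (x - p) <= eta ->
  / 2 * ee b p eta * (x - p)^2 <= / b * (x * (ln x - ln p) - (x - p)) - 3/4 * (x - p)^2.
Proof.
  intros hb hp hx hd.
  assert (h := xlog_lb x p hx hp).
  assert (hr : 0 <= Rabs (x - p)) by apply Rabs_pos.
  assert ((x - p)^2 / (2 * (p + eta)) <= (x - p)^2 / (2 * (p + Rabs (x - p)))).
  { apply Rmult_le_compat_l. apply pow2_ge_0. apply Rinv_le_contravar; lra. }
  assert (/ b * ((x - p)^2 / (2 * (p + eta))) <= / b * (x * (ln x - ln p) - (x - p))).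
  { apply Rmult_le_compat_l. left; apply Rinv_0_lt_compat; lra. lra. }
  unfold ee.
  replace (/ 2 * (/ (b * (p + eta)) - 3 / 2) * (x - p) ^ 2)
    with (/ b * ((x - p)^2 / (2 * (p + eta))) - 3/4 * (x - p)^2) by (field; lra).
  lra.
Qed.

Lemma local_min_part b r y2 : 2 < b -> 0 < r -> y2 <= g_beta b -> phi b r y2 = 1 ->
  local_min_F b r (H_beta b y2) (K_beta b y2).
Proof.
  intros hb hr hy hphi.
  assert (hg : y2 < g_beta b).
  { destruct (Req_dec y2 (g_beta b)) as [e|ne]; [|lra].
    subst. generalize (phi_g b r hb hr). lra. }
  assert (hl := l_pos b hb).
  set (ya := y2 - 3 * r / 2).
  destruct (H_spec b ya hb ltac:(unfold ya; lra)) as [[ha0 _] hGa0].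
  destruct (H_spec b y2 hb hy) as [[hb0 _] hGb0].
  destruct (K_spec b y2 hb hy) as [_ hGc0].
  assert (hab : H_beta b ya < H_beta b y2) by (apply H_mono; unfold ya; lra).
  assert (hbl : H_beta b y2 < l_beta b) by (apply H_lt; lra).
  assert (hcl : l_beta b < K_beta b y2) by (apply K_gt; lra).
  assert (hsum : H_beta b ya + H_beta b y2 + K_beta b y2 = 1) by (unfold phi in hphi; exact hphi).
  assert (hk := key_ineq b (H_beta b ya) (H_beta b y2) (K_beta b y2) hb
                 ltac:(lra) hbl hcl hsum ltac:(congruence)).
  destruct (eta_lemma b (H_beta b ya) (H_beta b y2) (K_beta b y2) hb
              ltac:(lra) ltac:(lra) hcl hk) as [de [hde hde']].
  set (p0 := H_beta b ya) in *. set (p1 := H_beta b y2) in *. set (p2 := K_beta b y2) in *.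
  set (eta := Rmin (de / 2) (Rmin (p0 / 2) (Rmin (p1 / 2) (p2 / 2)))).
  assert (m1 : eta <= de / 2) by apply Rmin_l.
  assert (m2 : eta <= p0 / 2) by (eapply Rle_trans; [apply Rmin_r|apply Rmin_l]).
  assert (m3 : eta <= p1 / 2).
  { eapply Rle_trans; [apply Rmin_r|]. eapply Rle_trans; [apply Rmin_r|apply Rmin_l]. }
  assert (m4 : eta <= p2 / 2).
  { eapply Rle_trans; [apply Rmin_r|]. eapply Rle_trans; [apply Rmin_r|apply Rmin_r]. }
  assert (m5 : 0 < eta) by (unfold eta; repeat apply Rmin_case; lra).
  destruct (hde' eta ltac:(lra)) as [e0 [e1 [e2 eS]]].
  split.
  { unfold in_Xi. lra. }
  exists (eta / 2). split. lra.
  intros x1 x2 hX hd.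
  assert (hh1 : Rabs (x1 - p1) < eta / 2).
  { apply sq_abs. lra. assert (0 <= (x2 - p2)^2) by apply pow2_ge_0. lra. }
  assert (hh2 : Rabs (x2 - p2) < eta / 2).
  { apply sq_abs. lra. assert (0 <= (x1 - p1)^2) by apply pow2_ge_0. lra. }
  set (x0 := 1 - x1 - x2).
  assert (ep0 : p0 = 1 - p1 - p2) by lra.
  assert (hh0 : Rabs (x0 - p0) <= eta).
  { replace (x0 - p0) with (- ((x1 - p1) + (x2 - p2))) by (unfold x0; lra).
    rewrite Rabs_Ropp. eapply Rle_trans. apply Rabs_triang. lra. }
  rewrite Rabs_lt_between in hh1, hh2.
  assert (hx1 : 0 < x1) by lra. assert (hx2 : 0 < x2) by lra.
  assert (hx0 : 0 < x0).
  { assert (h := Rle_abs (p0 - x0)). rewrite Rabs_minus_sym in h. lra. }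
  rewrite (F_simpl b x1 x2 r hb) by (fold x0; lra).
  rewrite (F_simpl b p1 p2 r hb) by lra.
  rewrite <- ep0. fold x0.
  assert (lp : forall p, ln p = b * (G_beta b p + 3/2 * p)).
  { intros p. unfold G_beta. field. lra. }
  assert (T0 := term_lb b p0 x0 eta hb ha0 hx0 hh0).
  assert (T1 := term_lb b p1 x1 eta hb hb0 hx1 ltac:(apply Rabs_le; lra)).
  assert (T2 := term_lb b p2 x2 eta hb ltac:(lra) hx2 ltac:(apply Rabs_le; lra)).
  assert (Q := quad_form (ee b p0 eta) (ee b p1 eta) (ee b p2 eta)
                 (x0 - p0) (x1 - p1) (x2 - p2) e0 e1 e2 eS ltac:(unfold x0; lra)).
  assert (ident :
    (- 3/4 * (x0^2 + x1^2 + x2^2) + 1/4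
     + / b * (ln 3 + x0 * ln x0 + x1 * ln x1 + x2 * ln x2)
     + r * x0 - r / 2 * (x1 + x2))
    - (- 3/4 * (p0^2 + p1^2 + p2^2) + 1/4
     + / b * (ln 3 + p0 * ln p0 + p1 * ln p1 + p2 * ln p2)
     + r * p0 - r / 2 * (p1 + p2))
    = (/ b * (x0 * (ln x0 - ln p0) - (x0 - p0)) - 3/4 * (x0 - p0)^2)
    + (/ b * (x1 * (ln x1 - ln p1) - (x1 - p1)) - 3/4 * (x1 - p1)^2)
    + (/ b * (x2 * (ln x2 - ln p2) - (x2 - p2)) - 3/4 * (x2 - p2)^2)).
  { rewrite (lp p0), (lp p1), (lp p2). fold ya in hGa0.
    rewrite hGa0, hGb0, hGc0. unfold x0. rewrite ep0. unfold ya. field. lra. }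
  lra.
Qed.

Theorem lemma5p8 (beta : R) (hbeta : 2 < beta) (r : R) (hr : 0 < r) :
  exists y2,
    (y2 <= g_beta beta /\
     H_beta beta (y2 - 3 * r / 2) + H_beta beta y2 + K_beta beta y2 = 1) /\
    (forall y, y <= g_beta beta ->
       H_beta beta (y - 3 * r / 2) + H_beta beta y + K_beta beta y = 1 ->
       y = y2) /\
    local_min_F beta r (H_beta beta y2) (K_beta beta y2).
Proof.
  destruct (exist_root beta r hbeta hr) as [y2 [hy hp]].
  exists y2. split; [split; [auto | exact hp]|]. split.
  - intros y hy' hp'.
    destruct (Rtotal_order y y2) as [lt|[eq|gt]]; auto; exfalso.
    + exact (uniq_root beta r y y2 hbeta hr hy' hy hp' hp lt).
    + exact (uniq_root beta r y2 y hbeta hr hy hy' hp hp' gt).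
  - apply local_min_part; auto.
Qed.
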